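(* Let $d,K,n$ be positive integers with $K\ge 2$. For $\tau>0$ define $\mathcal L_0(\mathbf W,\mathbf H,\tau)=\tau\log\sum_{i=1}^n\sum_{k=1}^K\mathcal L_{\mathrm{CE}}(\mathbf W^\top\mathbf h_{k,i},\mathbf y_k,\tau)$, and let $\mathcal{WH}^-=\{(\mathbf W,\mathbf H)\in\mathrm{OB}(d,K)\times\mathrm{OB}(d,nK):(\mathbf w_{k'}-\mathbf w_k)^\top\mathbf h_{k,i}\le0\ \forall i\in[n],k\in[K],k'\in[K]\setminus\{k\}\}$. Then $\mathcal L_0(\cdot,\cdot,\tau)$ converges uniformly to $\mathcal L_{\mathrm{HardMax}}$ on $\mathcal{WH}^-$ as $\tau\to0$.
   Context: $\mathrm{OB}(d,m)$ is the set of real $d\times m$ matrices with unit-norm columns; $\mathbf W$ has columns $\mathbf w_k$, $\mathbf H$ has columns $\mathbf h_{k,i}$. $\mathbf y_k$ is the $k$-th standard basis vector of $\mathbb R^K$; $\mathcal L_{\mathrm{CE}}(\mathbf z,\mathbf y_k,\tau)=-\log\big(\exp(z_k/\tau)/\sum_{j=1}^K\exp(z_j/\tau)\big)$. $\mathcal L_{\mathrm{HardMax}}(\mathbf W,\mathbf H)=\max_k\max_i\max_{k'\ne k}\langle\mathbf w_{k'}-\mathbf w_k,\mathbf h_{k,i}\rangle$. *)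

(* Defs.v *)
From HB Require Import structures.
From mathcomp Require Import all_boot all_order all_algebra.
From mathcomp Require Import all_classical all_reals all_analysis.
Set Implicit Arguments. Unset Strict Implicit. Unset Printing Implicit Defensive.
Import Order.TTheory GRing.Theory Num.Theory.
Local Open Scope ring_scope.

Section Defs.
Variable R : realType.

Definition ip (d : nat) (u v : 'cV[R]_d) : R := \sum_(j < d) u j 0 * v j 0.

Definition OB (d m : nat) (M : 'M[R]_(d, m)) : Prop :=
  forall j : 'I_m, ip (col j M) (col j M) = 1.

Definition wcol (d K : nat) (W : 'M[R]_(d, K)) (k : 'I_K) : 'cV[R]_d := col k W.

Definition hcol (d K n : nat) (H : 'M[R]_(d, K * n)) (k : 'I_K) (i : 'I_n)
  : 'cV[R]_d := col (mxvec_index k i) H.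

Definition L_CE (K : nat) (z : 'cV[R]_K) (k : 'I_K) (tau : R) : R :=
  - ln (expR (z k 0 / tau) / \sum_(j < K) expR (z j 0 / tau)).

Definition L0 (d K n : nat) (W : 'M[R]_(d, K)) (H : 'M[R]_(d, K * n)) (tau : R)
  : R :=
  tau * ln (\sum_(i < n) \sum_(k < K) L_CE (W^T *m hcol H k i) k tau).

(* L_HardMax(W,H) = max_k max_i max_{k' <> k} < w_{k'} - w_k , h_{k,i} >,
   computed as a maximum in the extended reals (the index set is nonempty
   when K >= 2, n >= 1, so the maximum is finite) *)
Definition L_HardMax (d K n : nat) (W : 'M[R]_(d, K)) (H : 'M[R]_(d, K * n)) : R :=
  fine (\big[Order.max/-oo%E]_(k < K) \big[Order.max/-oo%E]_(i < n)
          \big[Order.max/-oo%E]_(k' < K | k' != k)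
             (ip (wcol W k' - wcol W k) (hcol H k i))%:E).

Definition WHminus (d K n : nat) (W : 'M[R]_(d, K)) (H : 'M[R]_(d, K * n)) : Prop :=
  OB W /\ OB H /\
  forall (i : 'I_n) (k k' : 'I_K), k' != k ->
    ip (wcol W k' - wcol W k) (hcol H k i) <= 0.

End Defs.

(* Main.v *)
Require Import Defs.
From HB Require Import structures.
From mathcomp Require Import all_boot all_order all_algebra.
From mathcomp Require Import all_classical all_reals all_analysis.
From mathcomp Require Import ring lra.
Import Order.TTheory GRing.Theory Num.Theory.
Local Open Scope ring_scope.
Section S.
Variable R : realType.

Lemma ce_eq (K : nat) (z : 'cV[R]_K) (k : 'I_K) (tau : R) :
  L_CE z k tau = ln (1 + \sum_(j < K | j != k) expR ((z j 0 - z k 0) / tau)).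
Proof.
rewrite /L_CE.
have Tpos : 0 < \sum_(j < K) expR (z j 0 / tau).
  rewrite (bigD1 k) //= ltr_pwDl ?expR_gt0 //.
  by apply: sumr_ge0 => j _; apply/ltW/expR_gt0.
rewrite ln_div ?posrE ?expR_gt0 // expRK.
have -> : 1 + \sum_(j < K | j != k) expR ((z j 0 - z k 0) / tau)
   = (\sum_(j < K) expR (z j 0 / tau)) * expR (- (z k 0 / tau)).
  rewrite mulr_suml [RHS](bigD1 k) //= -expRD addrN expR0; congr (_ + _).
  by apply: eq_bigr => j _; rewrite -expRD mulrBl.
rewrite lnM ?posrE ?expR_gt0 // expRK.
by rewrite opprB addrC.
Qed.

Lemma ip_subl d (u v h : 'cV[R]_d) : ip (u - v) h = ip u h - ip v h.
Proof.
rewrite /ip -sumrB; apply: eq_bigr => j _.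
by rewrite !mxE mulrBl.
Qed.

Lemma z_ip d K (W : 'M[R]_(d, K)) (h : 'cV[R]_d) j :
  (W^T *m h) j 0 = ip (wcol W j) h.
Proof.
rewrite /ip !mxE; apply: eq_bigr => l _; by rewrite !mxE.
Qed.

Lemma hm K n (F : 'I_K -> 'I_n -> 'I_K -> R) : (2 <= K)%N -> (0 < n)%N ->
  exists k0 i0 k0', k0' != k0 /\
   fine (\big[Order.max/-oo%E]_(k < K) \big[Order.max/-oo%E]_(i < n)
          \big[Order.max/-oo%E]_(k' < K | k' != k) (F k i k')%:E) = F k0 i0 k0'
   /\ forall k i k', k' != k -> F k i k' <= F k0 i0 k0'.
Proof.
case: K F => [|[|K]] F // _; case: n F => [|n] F // _.
set G2 := fun (k : 'I_K.+2) (i : 'I_n.+1) =>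
  \big[Order.max/-oo%E]_(k' < K.+2 | k' != k) (F k i k')%:E.
set G1 := fun (k : 'I_K.+2) => \big[Order.max/-oo%E]_(i < n.+1) G2 k i.
have [k0 _ e1] := @eq_bigmax _ _ _ -oo%E ord0 xpredT G1 isT (fun _ _ => leNye _).
have [i0 _ e2] := @eq_bigmax _ _ _ -oo%E ord0 xpredT (G2 k0) isT (fun _ _ => leNye _).
have hl : lift k0 ord0 != k0 by rewrite eq_sym neq_lift.
have [k0' Hk0' e3] := @eq_bigmax _ _ _ -oo%E (lift k0 ord0) (fun k' => k' != k0)
   (fun k' => (F k0 i0 k')%:E) hl (fun _ _ => leNye _).
exists k0, i0, k0'; split; first exact: Hk0'.
have Htop : \big[Order.max/-oo%E]_(k < K.+2) G1 k = (F k0 i0 k0')%:E.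
  by rewrite e1 /G1 e2 /G2 e3.
split; first by rewrite Htop.
move=> k i k' Hk; rewrite -lee_fin -Htop.
apply: (le_trans _ (le_bigmax _ _ k)).
apply: (le_trans _ (le_bigmax _ _ i)).
rewrite /G2; exact: (@le_bigmax_cond _ _ _ -oo%E k' (fun x => x != k) (fun x => (F k i x)%:E) Hk).
Qed.
Lemma ln1Dx_lb (x : R) : 0 <= x -> x / (1 + x) <= ln (1 + x).
Proof.
move=> x0.
have p : 0 < 1 + x by rewrite ltr_pwDl.
have h : -1 < - (x / (1 + x)).
  rewrite ltrN2 ltr_pdivrMr // mul1r; lra.
have := le_ln1Dx h.
have -> : 1 - x / (1 + x) = (1 + x)^-1 by field; rewrite gt_eqF.
by rewrite lnV ?posrE // lerN2.
Qed.

Lemma core (S E M tau N : R) : 0 < tau -> 0 < N -> E = expR (M / tau) ->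
  E / N <= S -> S <= N * E -> `|tau * ln S - M| <= tau * ln N.
Proof.
move=> t0 N0 -> h1 h2.
have E0 : 0 < expR (M / tau) := expR_gt0 _.
have S0 : 0 < S by apply: lt_le_trans h1; rewrite divr_gt0.
have u : ln S <= ln N + M / tau.
  by rewrite -(expRK (M / tau)) -lnM ?posrE // ler_ln ?posrE ?mulr_gt0.
have l : M / tau - ln N <= ln S.
  by rewrite -(expRK (M / tau)) -ln_div ?posrE // ler_ln ?posrE ?divr_gt0.
have e : tau * (M / tau) = M by rewrite mulrC divfK // gt_eqF.
rewrite ler_norml; apply/andP; split.
  have := ler_wpM2l (ltW t0) l; rewrite mulrBr e; lra.
have := ler_wpM2l (ltW t0) u; rewrite mulrDr e; lra.
Qed.

End S.

Theorem mainTheorem10 (R : realType) (d K n : nat) :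
  (0 < d)%N -> (2 <= K)%N -> (0 < n)%N ->
  forall eps : R, 0 < eps ->
  exists delta : R, 0 < delta /\
    forall tau : R, 0 < tau -> tau < delta ->
    forall (W : 'M[R]_(d, K)) (H : 'M[R]_(d, K * n)),
      WHminus W H -> `|L0 W H tau - L_HardMax W H| < eps.
Proof.
move=> _ HK Hn eps eps0.
set N : R := (K * K * n * K.+1)%:R.
have N1 : 1 < N.
  rewrite /N (_ : 1 = 1%:R) // ltr_nat.
  have : (4 <= K * K)%N by apply: (@leq_mul 2 2).
  have : (K * K <= K * K * n)%N by rewrite leq_pmulr.
  have : (K * K * n <= K * K * n * K.+1)%N by rewrite leq_pmulr.
  move=> h1 h2 h3; apply: leq_trans h1; apply: leq_trans h2; exact: leq_trans h3.
have N0 : 0 < N by apply: lt_trans N1.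
have lN0 : 0 < ln N by rewrite ln_gt0.
exists (eps / ln N); split; first by rewrite divr_gt0.
move=> tau t0 tdelta W H [_ [_ Hneg]].
have [k0 [i0 [k0' [Hne [Ehm Hmax]]]]] :=
  @hm R _ _ (fun k i k' => ip (wcol W k' - wcol W k) (hcol H k i)) HK Hn.
rewrite /L_HardMax Ehm /L0.
set M := ip (wcol W k0' - wcol W k0) (hcol H k0 i0).
set E := expR (M / tau).
set a := fun k i j => ip (wcol W j - wcol W k) (hcol H k i).
set x := fun k i => \sum_(j < K | j != k) expR (a k i j / tau).
have Hce : forall k i, L_CE (W^T *m hcol H k i) k tau = ln (1 + x k i).
  move=> k i; rewrite ce_eq /x /a; congr (ln (1 + _)); apply: eq_bigr => j _.
  by rewrite !z_ip ip_subl.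
under eq_bigr do under eq_bigr do rewrite Hce.
have E0 : 0 < E := expR_gt0 _.
have M0 : M <= 0 by apply: Hneg.
have E1 : E <= 1 by rewrite /E expR_le1 pmulr_lle0 // invr_gt0.
have xge0 : forall k i, 0 <= x k i.
  by move=> k i; apply: sumr_ge0 => j _; apply/ltW/expR_gt0.
have xle : forall k i, x k i <= E * K%:R.
  move=> k i; rewrite /x.
  apply: (le_trans (y := \sum_(j < K | j != k) E)).
    apply: ler_sum => j Hj; rewrite /E ler_expR ler_pM2r ?invr_gt0 //.
    exact: Hmax.
  rewrite sumr_const -[E *+ _]mulr_natr ler_pM2l // ler_nat.
  by rewrite -[X in (_ <= X)%N]card_ord max_card.
have xlo : E <= x k0 i0.
  rewrite /x (bigD1 k0') //= lerDl; apply: sumr_ge0 => j _; apply/ltW/expR_gt0.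
have Sge0 : forall k i, 0 <= ln (1 + x k i).
  by move=> k i; apply: ln_ge0; rewrite lerDl.
have K0 : (0 < K)%N by apply: leq_trans HK.
apply: (le_lt_trans (@core R _ E M tau N t0 N0 (erefl E) _ _)).
- apply: (le_trans (y := E / (K.+1)%:R)).
    rewrite ler_pM2l // lef_pV2 ?posrE ?ltr0Sn // /N ler_nat.
    by rewrite leq_pmull // !muln_gt0 K0 Hn.
  apply: (le_trans (y := ln (1 + x k0 i0))); last first.
    rewrite (bigD1 i0) //= (bigD1 k0) //=.
    have h1 : 0 <= \sum_(i < K | i != k0) ln (1 + x i i0) by apply: sumr_ge0.
    have h2 : 0 <= \sum_(i < n | i != i0) \sum_(k < K) ln (1 + x k i).
      by apply: sumr_ge0 => i _; apply: sumr_ge0.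
    lra.
  apply: le_trans _ (@ln1Dx_lb R _ (xge0 k0 i0)).
  apply: (le_trans (y := x k0 i0 / (K.+1)%:R)).
    by rewrite ler_pM2r // invr_gt0 ltr0Sn.
  apply: ler_wpM2l; first exact: xge0.
  rewrite lef_pV2 ?posrE ?ltr0Sn //; last by rewrite ltr_pwDl.
  have -> : (K.+1%:R : R) = 1 + K%:R by rewrite -addn1 natrD addrC.
  rewrite lerD2l; apply: le_trans (xle k0 i0) _.
  by rewrite -[X in _ <= X]mul1r ler_wpM2r ?ler0n.
- apply: (le_trans (y := \sum_(i < n) \sum_(k < K) (E * K%:R))).
    apply: ler_sum => i _; apply: ler_sum => k _.
    apply: le_trans (@le_ln1Dx R _ _) (xle k i).
    by apply: (lt_le_trans (y := 0)); [rewrite ltrN10 | exact: xge0].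
  rewrite !sumr_const !card_ord -mulrnA -mulrnAr [N * E]mulrC ler_pM2l //.
  rewrite -[K%:R *+ _]mulr_natr -natrM /N ler_nat.
  by rewrite mulnA leq_pmulr.
by rewrite -ltr_pdivlMr // mulrC.
Qed.
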